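(* In the kernel LSTD setting described in the context, the estimate $\widehat\theta$ takes the form $$\widehat\theta=r+\frac{1}{\sqrt{n-K}}\sum_{t=1}^{n-K}\widehat\alpha_t\,\mathcal{K}(\cdot,x_t),$$ where the coefficient vector $\widehat\alpha\in\mathbb{R}^{\tilde n}$ ($\tilde n=n-K$) solves the linear system $$\big(\mathbf{K}_{\rm cov}+\lambda_n\mathbf{I}_{\tilde n}-\mathbf{K}_{\rm cr}\big)\widehat\alpha=\mathbf{y},$$ with $\mathbf{K}_{\rm cov}(i,j)=\mathcal{K}(x_i,x_j)/\tilde n$, $\mathbf{K}_{\rm cr}(i,j)=\sum_{k=1}^Kw_k\gamma^k\mathcal{K}(x_{i+k},x_j)/\tilde n$, and $\mathbf{y}(i)=\frac{1}{\sqrt{\tilde n}}\sum_{k=1}^Kw_k\sum_{\ell=1}^k\gamma^\ell r(x_{i+\ell})$, for $i,j=1,\dots,\tilde n$.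
   Context: $\mathbb{H}$ is an RKHS of functions on a state space $\mathcal{X}$ with kernel $\mathcal{K}$, containing the reward function $r$; $\mathcal{R}_x=\mathcal{K}(\cdot,x)$ and $g\otimes h$ is the operator $f\mapsto g\langle h,f\rangle_{\mathbb{H}}$. Given $\gamma\in[0,1)$, an integer $K\ge1$, weights $w_1,\dots,w_K\ge0$ summing to $1$, a sequence of states $x_1,\dots,x_n$ ($n>K$), $\tilde n=n-K$, define $\widehat\Sigma_{\rm cov}=\frac1{\tilde n}\sum_{t=1}^{\tilde n}\mathcal{R}_{x_t}\otimes\mathcal{R}_{x_t}$, $\widehat\Sigma_{\rm cr}=\frac1{\tilde n}\sum_{t=1}^{\tilde n}\mathcal{R}_{x_t}\otimes\sum_{k=1}^Kw_k\gamma^k\mathcal{R}_{x_{t+k}}$, $\widehat y_0=\frac1{\tilde n}\sum_{t=1}^{\tilde n}\mathcal{R}_{x_t}\sum_{k=1}^Kw_k\sum_{\ell=1}^{k-1}\gamma^\ell r(x_{t+\ell})$. For $\lambda_n>0$ the kernel LSTD estimate $\widehat\theta\in\mathbb{H}$ is the solution of $(\widehat\Sigma_{\rm cov}+\lambda_nI)\widehat\theta=(\widehat\Sigma_{\rm cov}+\lambda_nI)r+\widehat y_0+\widehat\Sigma_{\rm cr}\widehat\theta$. *)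

(* Defs.v *)
From HB Require Import structures.
From mathcomp Require Import all_boot all_order all_algebra.
From mathcomp Require Import reals.
Set Implicit Arguments. Unset Strict Implicit. Unset Printing Implicit Defensive.
Import Order.TTheory GRing.Theory Num.Theory.
Local Open Scope ring_scope.

(* A reproducing kernel Hilbert space H of real functions on X:
   H is a real vector space, [ip] a symmetric, bilinear, positive definite
   inner product, [ev f x] = f(x) (evaluation, injective so elements of H
   are functions), and [feat x] = R_x = K(.,x) the representer of evaluation. *)
Record rkhs (R : realType) (X : Type) (H : lmodType R) := RKHS {
  ip : H -> H -> R;
  ev : H -> X -> R;
  feat : X -> H;
  ip_sym : forall f g, ip f g = ip g f;
  ip_linear : forall (a : R) f g h, ip (a *: f + g) h = a * ip f h + ip g h;
  ip_pos : forall f, f != 0 -> 0 < ip f f;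
  ev_linear : forall (a : R) f g x, ev (a *: f + g) x = a * ev f x + ev g x;
  ev_inj : injective ev;
  reproducing : forall x f, ip (feat x) f = ev f x
}.

Arguments rkhs : clear implicits.

Section LSTD.
Variables (R : realType) (X : Type) (H : lmodType R) (S : rkhs R X H).

Definition kern (a b : X) : R := ip S (feat S a) (feat S b).

Definition tens (g h f : H) : H := ip S h f *: g.

Variables (gamma : R) (K : nat) (w : nat -> R) (x : nat -> X) (m : nat).
(* m plays the role of n~ = n - K; states are x_1, ..., x_n (1-based). *)

Definition Sigma_cov (f : H) : H :=
  (m%:R)^-1 *: \sum_(1 <= t < m.+1) tens (feat S (x t)) (feat S (x t)) f.

Definition Sigma_cr (f : H) : H :=
  (m%:R)^-1 *: \sum_(1 <= t < m.+1)
     tens (feat S (x t))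
          (\sum_(1 <= k < K.+1) (w k * gamma ^+ k) *: feat S (x (t + k))%N) f.

Definition y0 (r : H) : H :=
  (m%:R)^-1 *: \sum_(1 <= t < m.+1)
     (\sum_(1 <= k < K.+1) w k *
        \sum_(1 <= l < k) gamma ^+ l * ev S r (x (t + l))%N) *: feat S (x t).

Definition lstd_eq (lam : R) (r theta : H) : Prop :=
  Sigma_cov theta + lam *: theta =
  Sigma_cov r + lam *: r + y0 r + Sigma_cr theta.

(* Matrices indexed by 'I_m; index i : 'I_m corresponds to time i+1. *)
Definition Kcov : 'M[R]_m :=
  \matrix_(i < m, j < m) (kern (x i.+1) (x j.+1) / m%:R).

Definition Kcr : 'M[R]_m :=
  \matrix_(i < m, j < m)
    ((\sum_(1 <= k < K.+1) w k * gamma ^+ k * kern (x (i.+1 + k))%N (x j.+1))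
       / m%:R).

Definition yvec (r : H) : 'cV[R]_m :=
  \col_(i < m) ((Num.sqrt (m%:R))^-1 *
     \sum_(1 <= k < K.+1) w k *
        \sum_(1 <= l < k.+1) gamma ^+ l * ev S r (x (i.+1 + l))%N).

Definition repr_form (r : H) (alpha : 'cV[R]_m) : H :=
  r + (Num.sqrt (m%:R))^-1 *: \sum_(i < m) alpha i ord0 *: feat S (x i.+1).

End LSTD.

(* Main.v *)
Require Import Defs.
From HB Require Import structures.
From mathcomp Require Import all_boot all_order all_algebra.
From mathcomp Require Import reals.
Import Order.TTheory GRing.Theory Num.Theory.
Local Open Scope ring_scope.

Lemma ip0l (R : realType) (X : Type) (H : lmodType R) (S : rkhs R X H) h :
  ip S 0 h = 0.
Proof.
have := ip_linear S 1 0 0 h; rewrite scale1r addr0 mul1r => E.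
by apply: (@addrI _ (ip S 0 h)); rewrite addr0 -E.
Qed.

Lemma ip_lin2 (R : realType) (X : Type) (H : lmodType R) (S : rkhs R X H) a f g h :
  ip S h (a *: f + g) = a * ip S h f + ip S h g.
Proof. by rewrite ip_sym ip_linear !(ip_sym S h). Qed.

Lemma ip0r (R : realType) (X : Type) (H : lmodType R) (S : rkhs R X H) h :
  ip S h 0 = 0.
Proof. by rewrite ip_sym ip0l. Qed.

Lemma ipZr (R : realType) (X : Type) (H : lmodType R) (S : rkhs R X H) a f h :
  ip S h (a *: f) = a * ip S h f.
Proof. by rewrite -[a *: f]addr0 ip_lin2 ip0r addr0. Qed.

Lemma ipDr (R : realType) (X : Type) (H : lmodType R) (S : rkhs R X H) f g h :
  ip S h (f + g) = ip S h f + ip S h g.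
Proof. by rewrite -[f]scale1r ip_lin2 mul1r scale1r. Qed.

Lemma ipBr (R : realType) (X : Type) (H : lmodType R) (S : rkhs R X H) f g h :
  ip S h (f - g) = ip S h f - ip S h g.
Proof. by rewrite -scaleN1r ipDr ipZr mulN1r. Qed.

Lemma ip_sumr (R : realType) (X : Type) (H : lmodType R) (S : rkhs R X H) (I : Type)
   (s : seq I) (P : pred I) (F : I -> H) h :
  ip S h (\sum_(i <- s | P i) F i) = \sum_(i <- s | P i) ip S h (F i).
Proof.
by elim/big_rec2: _ => [|i a b _ <-]; rewrite ?ip0r ?ipDr.
Qed.

Lemma ip_suml (R : realType) (X : Type) (H : lmodType R) (S : rkhs R X H) (I : Type)
   (s : seq I) (P : pred I) (F : I -> H) h :
  ip S (\sum_(i <- s | P i) F i) h = \sum_(i <- s | P i) ip S (F i) h.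
Proof.
by rewrite ip_sym ip_sumr; apply: eq_bigr => i _; rewrite ip_sym.
Qed.

Lemma ipZl (R : realType) (X : Type) (H : lmodType R) (S : rkhs R X H) a f h :
  ip S (a *: f) h = a * ip S f h.
Proof. by rewrite -[a *: f]addr0 ip_linear ip0l addr0. Qed.

Definition Bc (R : realType) (X : Type) (H : lmodType R) (S : rkhs R X H)
  (x : nat -> X) (m : nat) (u : H) (i : 'I_m) : R :=
  m%:R^-1 * ip S (feat S (x i.+1)) u.

Definition Cc (R : realType) (X : Type) (H : lmodType R) (S : rkhs R X H)
  (gamma : R) (K : nat) (w : nat -> R) (x : nat -> X) (m : nat) (u : H) (i : 'I_m) : R :=
  m%:R^-1 * \sum_(1 <= k < K.+1) w k * gamma ^+ k * ip S (feat S (x (i.+1 + k)%N)) u.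

Definition Yc (R : realType) (X : Type) (H : lmodType R) (S : rkhs R X H)
  (gamma : R) (K : nat) (w : nat -> R) (x : nat -> X) (m : nat) (r : H) (i : 'I_m) : R :=
  m%:R^-1 * \sum_(1 <= k < K.+1) w k *
        \sum_(1 <= l < k) gamma ^+ l * ev S r (x (i.+1 + l))%N.

Arguments Bc {R X H}.
Arguments Cc {R X H}.
Arguments Yc {R X H}.

Lemma reidx (V : nmodType) m (F : nat -> V) :
  \sum_(1 <= t < m.+1) F t = \sum_(i < m) F i.+1.
Proof. by rewrite big_add1 /= big_mkord. Qed.

Lemma covE (R : realType) (X : Type) (H : lmodType R) (S : rkhs R X H)
  (x : nat -> X) (m : nat) (u : H) :
  Sigma_cov S x m u = \sum_(i < m) Bc S x m u i *: feat S (x i.+1).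
Proof.
rewrite /Sigma_cov /tens reidx scaler_sumr; apply: eq_bigr => i _.
by rewrite scalerA.
Qed.

Lemma crE (R : realType) (X : Type) (H : lmodType R) (S : rkhs R X H)
  (gamma : R) (K : nat) (w : nat -> R) (x : nat -> X) (m : nat) (u : H) :
  Sigma_cr S gamma K w x m u = \sum_(i < m) Cc S gamma K w x m u i *: feat S (x i.+1).
Proof.
rewrite /Sigma_cr /tens reidx scaler_sumr; apply: eq_bigr => i _.
rewrite scalerA /Cc ip_suml; congr (_ * _ *: _); apply: eq_bigr => k _.
by rewrite ipZl.
Qed.

Lemma y0E (R : realType) (X : Type) (H : lmodType R) (S : rkhs R X H)
  (gamma : R) (K : nat) (w : nat -> R) (x : nat -> X) (m : nat) (r : H) :
  y0 S gamma K w x m r = \sum_(i < m) Yc S gamma K w x m r i *: feat S (x i.+1).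
Proof.
rewrite /y0 reidx scaler_sumr; apply: eq_bigr => i _.
by rewrite scalerA.
Qed.
From mathcomp Require Import ring.

Definition vsum (R : realType) (X : Type) (H : lmodType R) (S : rkhs R X H)
  (x : nat -> X) (m : nat) (a : 'cV[R]_m) : H :=
  \sum_(j < m) a j ord0 *: feat S (x j.+1).
Arguments vsum {R X H}.

Lemma KcovE (R : realType) (X : Type) (H : lmodType R) (S : rkhs R X H)
  (x : nat -> X) (m : nat) (a : 'cV[R]_m) i :
  (Kcov S x m *m a) i ord0 = Bc S x m (vsum S x m a) i.
Proof.
rewrite mxE /Bc /vsum ip_sumr mulr_sumr; apply: eq_bigr => j _.
rewrite mxE ipZr /kern; ring.
Qed.

Lemma KcrE (R : realType) (X : Type) (H : lmodType R) (S : rkhs R X H)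
  (gamma : R) (K : nat) (w : nat -> R) (x : nat -> X) (m : nat) (a : 'cV[R]_m) i :
  (Kcr S gamma K w x m *m a) i ord0 = Cc S gamma K w x m (vsum S x m a) i.
Proof.
rewrite mxE /Cc /vsum; symmetry.
under eq_bigr => k _ do rewrite ip_sumr mulr_sumr.
rewrite exchange_big mulr_sumr; apply: eq_bigr => j _ /=.
rewrite mxE mulr_suml mulr_suml mulr_sumr; apply: eq_bigr => k _.
rewrite ipZr /kern; ring.
Qed.

Lemma MentE (R : realType) (X : Type) (H : lmodType R) (S : rkhs R X H)
  (gamma : R) (K : nat) (w : nat -> R) (x : nat -> X) (m : nat) lam (a : 'cV[R]_m) i :
  ((Kcov S x m + lam%:M - Kcr S gamma K w x m) *m a) i ord0 =
  Bc S x m (vsum S x m a) i - Cc S gamma K w x m (vsum S x m a) i + lam * a i ord0.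
Proof.
rewrite mulmxBl mulmxDl mul_scalar_mx.
have -> : forall (A B C : 'M[R]_(m,1)), (A + B - C) i ord0 = A i ord0 + B i ord0 - C i ord0.
  by move=> *; rewrite !mxE.
rewrite [(lam *: a) i ord0]mxE KcovE KcrE; ring.
Qed.

Lemma BcD (R : realType) (X : Type) (H : lmodType R) (S : rkhs R X H) x m a u v i :
  Bc S x m (a *: u + v) i = a * Bc S x m u i + Bc S x m v i.
Proof. rewrite /Bc ip_lin2; ring. Qed.

Lemma CcD (R : realType) (X : Type) (H : lmodType R) (S : rkhs R X H)
  (gamma : R) (K : nat) (w : nat -> R) x m a u v i :
  Cc S gamma K w x m (a *: u + v) i = a * Cc S gamma K w x m u i + Cc S gamma K w x m v i.
Proof.
rewrite /Cc mulrCA -mulrDr; congr (_ * _).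
rewrite mulr_sumr -big_split; apply: eq_bigr => k _ /=; rewrite ip_lin2; ring.
Qed.

Lemma yvecE (R : realType) (X : Type) (H : lmodType R) (S : rkhs R X H)
  (gamma : R) (K : nat) (w : nat -> R) x m r i : (0 < m)%N ->
  yvec S gamma K w x m r i ord0 =
   (Num.sqrt m%:R)^-1 * (m%:R * (Yc S gamma K w x m r i + Cc S gamma K w x m r i)).
Proof.
move=> m0; rewrite mxE /Yc /Cc -mulrDr mulVKf ?pnatr_eq0 -?lt0n //.
congr (_ * _); rewrite -big_split; apply: eq_big_nat => k /andP[k1 _] /=.
rewrite big_nat_recr //= reproducing; ring.
Qed.

Lemma zmod_aux (V : zmodType) (a b c d l l' : V) :
  a - b - c - d + (l - l') = (a + l) - (b + l' + c + d).
Proof.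
rewrite !opprD !addrA.
rewrite (addrAC a l) -(addrA (a - b) l) (addrAC (a - b)) (addrAC (a - b - c)).
by rewrite addrA addrAC.
Qed.

Lemma lstdE (R : realType) (X : Type) (H : lmodType R) (S : rkhs R X H)
  (gamma : R) (K : nat) (w : nat -> R) x m lam r theta :
  lstd_eq S gamma K w x m lam r theta <->
  \sum_(i < m) (Bc S x m theta i - Bc S x m r i - Yc S gamma K w x m r i
      - Cc S gamma K w x m theta i) *: feat S (x i.+1) + lam *: (theta - r) = 0.
Proof.
have -> : \sum_(i < m) (Bc S x m theta i - Bc S x m r i - Yc S gamma K w x m r i
      - Cc S gamma K w x m theta i) *: feat S (x i.+1) =
   \sum_(i < m) Bc S x m theta i *: feat S (x i.+1)
   - \sum_(i < m) Bc S x m r i *: feat S (x i.+1)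
   - \sum_(i < m) Yc S gamma K w x m r i *: feat S (x i.+1)
   - \sum_(i < m) Cc S gamma K w x m theta i *: feat S (x i.+1).
  by rewrite -!sumrB; apply: eq_bigr => i _; rewrite !scalerBl.
rewrite /lstd_eq covE crE y0E covE scalerBr zmod_aux.
split => [->|/eqP]; first by rewrite subrr.
by rewrite subr_eq0 => /eqP.
Qed.

Lemma BcZ (R : realType) (X : Type) (H : lmodType R) (S : rkhs R X H) x m a u i :
  Bc S x m (a *: u) i = a * Bc S x m u i.
Proof. rewrite /Bc ipZr; ring. Qed.

Lemma BcB (R : realType) (X : Type) (H : lmodType R) (S : rkhs R X H) x m u v i :
  Bc S x m (u - v) i = Bc S x m u i - Bc S x m v i.
Proof. rewrite /Bc ipBr; ring. Qed.

Lemma CcZ (R : realType) (X : Type) (H : lmodType R) (S : rkhs R X H)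
  (gamma : R) (K : nat) (w : nat -> R) x m a u i :
  Cc S gamma K w x m (a *: u) i = a * Cc S gamma K w x m u i.
Proof.
rewrite /Cc mulrCA; congr (_ * _).
rewrite mulr_sumr; apply: eq_bigr => k _ /=; rewrite ipZr; ring.
Qed.

Lemma CcB (R : realType) (X : Type) (H : lmodType R) (S : rkhs R X H)
  (gamma : R) (K : nat) (w : nat -> R) x m u v i :
  Cc S gamma K w x m (u - v) i = Cc S gamma K w x m u i - Cc S gamma K w x m v i.
Proof.
rewrite /Cc -mulrBr; congr (_ * _).
rewrite -sumrB; apply: eq_bigr => k _ /=; rewrite ipBr; ring.
Qed.

Theorem lemma6 (R : realType) (X : Type) (H : lmodType R) (S : rkhs R X H)
  (gamma : R) (K : nat) (w : nat -> R) (n : nat) (x : nat -> X)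
  (lam : R) (r : H) :
  0 <= gamma -> gamma < 1 -> (1 <= K)%N ->
  (forall k, (1 <= k <= K)%N -> 0 <= w k) ->
  \sum_(1 <= k < K.+1) w k = 1 ->
  (K < n)%N -> 0 < lam ->
  forall theta : H,
    lstd_eq S gamma K w x (n - K)%N lam r theta <->
    exists alpha : 'cV[R]_(n - K)%N,
      (Kcov S x (n - K)%N + lam%:M - Kcr S gamma K w x (n - K)%N) *m alpha
        = yvec S gamma K w x (n - K)%N r
      /\ theta = @repr_form R X H S x (n - K)%N r alpha.
Proof.
move=> g0 g1 K1 wpos wsum Kn lam0 theta.
have m0 : (0 < n - K)%N by rewrite subn_gt0.
move: (n - K)%N m0 => m m0.
set s := Num.sqrt (m%:R : R).
have s0 : 0 < s by rewrite sqrtr_gt0 ltr0n.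
have ss : s ^+ 2 = m%:R by rewrite sqr_sqrtr // ler0n.
have lamnz : lam != 0 by rewrite gt_eqF.
have snz : s != 0 by rewrite gt_eqF.
rewrite lstdE; split.
- move=> E.
  set coef := fun i : 'I_m => (Bc S x m theta i - Bc S x m r i - Yc S gamma K w x m r i
      - Cc S gamma K w x m theta i).
  have E2 : lam *: (theta - r) = - \sum_(i < m) coef i *: feat S (x i.+1).
    by apply/eqP; rewrite -addr_eq0 addrC E.
  have Ht : theta - r = \sum_(i < m) (- coef i / lam) *: feat S (x i.+1).
    rewrite -[theta - r]scale1r -(mulVf lamnz) -scalerA E2 scalerN scaler_sumr -sumrN.
    apply: eq_bigr => i _; rewrite scalerA -scaleNr; congr (_ *: _).
    by rewrite mulrC mulNr.
  exists (\col_i (s * (- coef i / lam))).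
  have Hv : \sum_(i < m) (\col_i (s * (- coef i / lam))) i ord0 *: feat S (x i.+1)
       = s *: (theta - r).
    rewrite Ht scaler_sumr; apply: eq_bigr => i _; by rewrite mxE scalerA.
  split.
  + apply/colP => i; rewrite MentE yvecE // /vsum Hv BcZ CcZ BcB CcB mxE /coef -/s -ss.
    by field; rewrite snz lamnz.
  + by rewrite /repr_form Hv scalerA mulVf // scale1r addrC subrK.
- move=> [a [Hm ->]].
  rewrite /repr_form -/s.
  set v := \sum_(i < m) a i ord0 *: feat S (x i.+1).
  rewrite [r + _]addrC addrK scalerA.
  have -> : (lam * s^-1) *: v = \sum_(i < m) (lam * s^-1 * a i ord0) *: feat S (x i.+1).
    by rewrite /v scaler_sumr; apply: eq_bigr => i _; rewrite scalerA.
  rewrite -big_split big1 // => i _.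
  rewrite /= -scalerDl BcD CcD.
  have := congr1 (fun M : 'M[R]_(m,1) => M i ord0) Hm; rewrite MentE yvecE // -/s => e.
  change (vsum S x m a) with v in e.
  set Bv := Bc S x m v i in e *.
  have -> : Bv = s^-1 * (m%:R * (Yc S gamma K w x m r i + Cc S gamma K w x m r i))
     + Cc S gamma K w x m v i - lam * a i ord0 by rewrite -e; ring.
  rewrite -ss.
  apply/eqP; rewrite scaler_eq0; apply/orP; left; apply/eqP.
  by field; rewrite snz.
Qed.
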